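(* Let $m_1,\dots,m_n$ be odd integers, each greater than $1$, and let $-1$ denote the element $(-1,\dots,-1)$ of $U=\prod_{i=1}^n\operatorname{U}_{m_i}$. The short exact sequence $1\to\{\pm1\}\to U\to U/\{\pm1\}\to 1$ splits (equivalently, $\{\pm1\}$ has a complement in $U$) if and only if there exist $1\le j\le n$ and a prime $p\equiv 3\pmod 4$ with $p\mid m_j$.
   Context: $\operatorname{U}_m$ denotes the multiplicative group of units of $\mathbb Z/m\mathbb Z$. *)

(* Defs.v *)
From HB Require Import structures.
From mathcomp Require Import all_boot all_order all_algebra all_fingroup.
Set Implicit Arguments. Unset Strict Implicit. Unset Printing Implicit Defensive.
Import GRing.Theory.

Section DProdGroup.
Variables (I : finType) (G : I -> finGroupType).

Definition dprodg_type := {dffun forall i : I, G i}.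
HB.instance Definition _ := Finite.on dprodg_type.

Definition dprodg_one : dprodg_type := [ffun i => 1%g].
Definition dprodg_mul (x y : dprodg_type) : dprodg_type := [ffun i => (x i * y i)%g].
Definition dprodg_inv (x : dprodg_type) : dprodg_type := [ffun i => (x i)^-1%g].

Lemma dprodg_mulA : associative dprodg_mul.
Proof. by move=> x y z; apply/ffunP=> i; rewrite !ffunE mulgA. Qed.
Lemma dprodg_mul1 : left_id dprodg_one dprodg_mul.
Proof. by move=> x; apply/ffunP=> i; rewrite !ffunE mul1g. Qed.
Lemma dprodg_mulV : left_inverse dprodg_one dprodg_inv dprodg_mul.
Proof. by move=> x; apply/ffunP=> i; rewrite !ffunE mulVg. Qed.

HB.instance Definition _ :=
  Finite_isGroup.Build dprodg_type dprodg_mulA dprodg_mul1 dprodg_mulV.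
End DProdGroup.

(* U_m, the unit group of Z/mZ (for m > 1, 'Z_m is Z/mZ). *)
Definition Um (m : nat) : finGroupType := {unit 'Z_m}.

Definition Um_m1 (m : nat) : Um m := FinRing.unit 'Z_m (unitrN1 'Z_m).

Definition Uprod (n : nat) (m : 'I_n -> nat) : finGroupType :=
  dprodg_type (fun i : 'I_n => Um (m i)).

Definition Uprod_m1 (n : nat) (m : 'I_n -> nat) : Uprod m :=
  [ffun i => Um_m1 (m i)].

(* Main.v *)
Require Import Defs.
From HB Require Import structures.
From mathcomp Require Import all_boot all_order all_algebra all_fingroup all_solvable all_field.
From mathcomp Require Import zify ring.
From Stdlib Require Classical_Prop.
Set Implicit Arguments. Unset Strict Implicit. Unset Printing Implicit Defensive.
Import GRing.Theory FinRing.Theory.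

Lemma hensel_step p k a : prime p -> odd p -> 0 < k -> p ^ k %| a ^ 2 + 1 ->
  exists b, p ^ k.+1 %| b ^ 2 + 1.
Proof.
move=> pp op k0 dv.
have p0 : 0 < p by exact: prime_gt0.
have cpa : coprime p (2 * a).
  rewrite coprimeMr; apply/andP; split.
    by rewrite coprimen2.
  rewrite prime_coprime //; apply/negP => pa.
  have : p %| a ^ 2 + 1 by apply: dvdn_trans dv; rewrite dvdn_exp.
  rewrite dvdn_addr; last by rewrite dvdn_exp.
  by rewrite dvdn1 => /eqP p1; rewrite p1 in pp.
have [u _ hu] := Bezoutl (2 * a) p0.
rewrite (eqnP cpa) in hu.
set c := (a ^ 2 + 1) %/ p ^ k.
have hc : a ^ 2 + 1 = c * p ^ k by rewrite divnK.
exists (a + u * c * p ^ k).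
have -> : (a + u * c * p ^ k) ^ 2 + 1 = p ^ k * (c * (1 + u * (2 * a))) + (u * c) ^ 2 * (p ^ k * p ^ k).
  have -> : (a + u * c * p ^ k) ^ 2 + 1 = (a ^ 2 + 1) + 2 * a * (u * c * p ^ k) + (u * c * p ^ k) ^ 2 by ring.
  rewrite hc; ring.
apply: dvdn_add.
  by rewrite expnS mulnC dvdn_mul // dvdn_mull.
apply: dvdn_mull; rewrite expnS dvdn_mul //.
by rewrite -[X in X %| _]expn1 dvdn_exp2l.
Qed.

Lemma hensel p k a : prime p -> odd p -> p %| a ^ 2 + 1 ->
  exists b, p ^ k %| b ^ 2 + 1.
Proof.
move=> pp op dv; elim: k => [|k [b hb]]; first by exists 0.
case: k hb => [|k] hb; first by exists a; rewrite expn1.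
exact: (hensel_step pp op _ hb).
Qed.

Lemma sqrtm1_prime p : prime p -> p %% 4 = 1 -> exists a, p %| a ^ 2 + 1.
Proof.
move=> pp p4.
have /cyclicP [g Hg] := field_unit_group_cyclic [set: {unit 'F_p}]%G.
have og : #[g]%g = p.-1 by rewrite /order -Hg card_finField_unit card_Fp.
have p5 : 4 < p by have := prime_gt1 pp; lia.
set q := #[g]%g %/ 4.
have e : #[g]%g = q * 4 by rewrite og /q og; lia.
have q0 : 0 < q by lia.
set h := (g ^+ q)%g.
have oh : #[h]%g = 4 by rewrite /h orderXdiv; [rewrite e mulKn | rewrite e dvdn_mulr].
have h2 : (h ^+ 2)%g != 1%g by rewrite -order_dvdn oh.
have h4 : (h ^+ 4)%g == 1%g by rewrite -order_dvdn oh.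
set z : 'F_p := val h.
have z2 : (z ^+ 2 != 1)%R.
  apply: contra h2 => /eqP z2; apply/eqP; apply: val_inj; by rewrite val_unitX z2.
have z4 : ((z ^+ 2) ^+ 2 == 1)%R.
  by rewrite -exprM /z -val_unitX (eqP h4).
move: z4; rewrite sqrf_eq1 (negbTE z2) /= => /eqP z2m.
exists (z : nat).
rewrite (dvdn_pcharf (pchar_Fp pp)) natrD natrX natr_Zp z2m.
by rewrite addNr.
Qed.

Lemma dv_congr d x y : x = y %[mod d] -> d %| x ^ 2 + 1 -> d %| y ^ 2 + 1.
Proof.
by move=> Hxy; rewrite /dvdn -modnDml -modnXm Hxy modnXm modnDml.
Qed.

Lemma sqrtm1 m : 0 < m -> (forall p, prime p -> p %| m -> p %% 4 = 1) ->
  exists a, m %| a ^ 2 + 1.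
Proof.
elim/ltn_ind: m => m IH m0 Hp.
have [m1|m1] := leqP m 1.
  by exists 0; have -> : m = 1 by lia.
have pp := pdiv_prime m1; set p := pdiv m in pp *.
have pm : p %| m := pdiv_dvd m.
have [m' cpm' em] := pfactor_coprime pp m0.
set k := logn p m in em.
have k0 : 0 < k by rewrite /k logn_gt0 mem_primes pp m0 pm.
have p2 := prime_gt1 pp.
have pk2 : 1 < p ^ k by rewrite -(expn0 p) ltn_exp2l.
have m'0 : 0 < m' by move: m0; rewrite em muln_gt0 => /andP[].
have [b hb] : exists b, m' %| b ^ 2 + 1.
  apply: IH => //; first by rewrite em -{1}(muln1 m') ltn_mul2l m'0.
  by move=> q pq qm; apply: Hp => //; rewrite em dvdn_mulr.
have p4 := Hp p pp pm.
have op : odd p.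
  have : p %% 2 = 1 by rewrite -(modn_dvdm p (isT : 2 %| 4)) p4.
  by rewrite modn2; case: (odd p).
have [a0 ha0] := sqrtm1_prime pp p4.
have [a ha] := hensel k pp op ha0.
have co : coprime (p ^ k) m' by rewrite coprimeXl.
exists (chinese (p ^ k) m' a b).
rewrite em mulnC Gauss_dvd // ; apply/andP; split.
  by apply: dv_congr ha; rewrite chinese_modl.
by apply: dv_congr hb; rewrite chinese_modr.
Qed.

Lemma UmulE n (m : 'I_n -> nat) (u v : Uprod m) i : ((u * v)%g i = u i * v i)%g.
Proof. by rewrite /= ffunE. Qed.

Lemma U1E n (m : 'I_n -> nat) i : ((1 : Uprod m)%g i = 1)%g.
Proof. by rewrite /= ffunE. Qed.

Lemma UmulC n (m : 'I_n -> nat) (u v : Uprod m) : (u * v = v * u)%g.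
Proof. by apply/ffunP => i; rewrite !UmulE; apply: val_inj; rewrite !val_unitM mulrC. Qed.

Lemma Um1E n (m : 'I_n -> nat) i : val (Uprod_m1 m i) = (-1)%R.
Proof. by rewrite ffunE. Qed.

Lemma Um1sq n (m : 'I_n -> nat) : (Uprod_m1 m * Uprod_m1 m = 1)%g.
Proof.
by apply/ffunP => i; rewrite UmulE U1E; apply: val_inj; rewrite val_unitM Um1E mulrNN mulr1.
Qed.

Section Zm.
Variable M : nat.
Hypothesis M1 : 1 < M.

Lemma ZvalM (x y : 'Z_M) : val (x * y)%R = (x * y) %% M.
Proof. by rewrite /= [X in _ %% X]Zp_cast. Qed.
Lemma Zval1 : val (1%R : 'Z_M) = 1.
Proof. by rewrite /= [X in _ %% X]Zp_cast // modn_small. Qed.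
Lemma ZvalN1 : val ((-1)%R : 'Z_M) = M - 1.
Proof. rewrite /= !(Zp_cast M1) ?modn_small //; lia. Qed.
End Zm.

Section Fp.
Variables (M p : nat).
Hypotheses (M1 : 1 < M) (pp : prime p) (pM : p %| M).
Local Open Scope ring_scope.

Definition rF (x : 'Z_M) : 'F_p := (val x)%:R.

Lemma natr_modM k : ((k %% M)%N%:R : 'F_p) = k%:R.
Proof.
have M0 : (M%:R : 'F_p) = 0 by apply/eqP; rewrite -(dvdn_pcharf (pchar_Fp pp)).
by rewrite [in RHS](divn_eq k M) natrD natrM M0 mulr0 add0r.
Qed.

Lemma rFM x y : rF (x * y) = rF x * rF y.
Proof. by rewrite /rF ZvalM // natr_modM natrM. Qed.
Lemma rF1 : rF 1 = 1.
Proof. by rewrite /rF Zval1. Qed.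
Lemma rFN1 : rF (-1) = -1.
Proof.
have M0 : (M%:R : 'F_p) = 0 by apply/eqP; rewrite -(dvdn_pcharf (pchar_Fp pp)).
by rewrite /rF ZvalN1 // natrB ?M0 ?sub0r //; lia.
Qed.

Lemma rF_unit (u : {unit 'Z_M}) : rF (val u) != 0.
Proof.
apply/eqP => h.
have : rF (val u * val (u^-1)%g) = 1 by rewrite -val_unitM mulgV val_unit1 rF1.
by rewrite rFM h mul0r => /eqP; rewrite eq_sym oner_eq0.
Qed.

Lemma fermat (t : 'F_p) : t != 0 -> t ^+ p.-1 = 1.
Proof.
move=> t0; apply: (mulfI t0); rewrite mulr1 -exprS prednK ?prime_gt0 //.
by have := expf_card t; rewrite card_Fp.
Qed.
End Fp.

Lemma cyc2 (gT : finGroupType) (x y : gT) : (x * x = 1)%g -> y \in <[x]>%g -> y = 1%g \/ y = x.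
Proof.
move=> xx /cycleP [i ->].
have x2 : (x ^+ 2 = 1)%g by rewrite expgS expg1.
rewrite (divn_eq i 2) expgD mulnC expgM x2 expg1n mul1g.
have : i %% 2 < 2 by rewrite ltn_pmod.
by case: (i %% 2) => [|[|k]] // _; [left; rewrite expg0 | right; rewrite expg1].
Qed.

Local Open Scope ring_scope.

Lemma split_if n (m : 'I_n -> nat) (hm : forall i, odd (m i) /\ (1 < m i)%N) j p :
  prime p -> (p %% 4 = 3)%N -> (p %| m j)%N ->
  [splits [set: Uprod m], over <[Uprod_m1 m]>]%g.
Proof.
move=> pp p3 pm.
have M1 := (hm j).2.
set e := (p %/ 4 * 2 + 1)%N.
have e2 : (e * 2 = p.-1)%N by rewrite /e; lia.
have oe : odd e by rewrite /e oddD oddM andbF.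
pose g (u : Uprod m) : 'F_p := (rF p (val (u j))) ^+ e.
have gM u v : g (u * v)%g = g u * g v by rewrite /g UmulE val_unitM rFM // exprMn.
have g1 : g 1%g = 1 by rewrite /g U1E val_unit1 rF1 // expr1n.
have gx : g (Uprod_m1 m) = -1 by rewrite /g Um1E rFN1 // -signr_odd oe expr1.
have gpm u : g u = 1 \/ g u = -1.
  have : (g u ^+ 2 == 1) by rewrite /g -exprM e2 fermat // rF_unit.
  by rewrite sqrf_eq1 => /orP[] /eqP; [left|right].
have N11 : (-1 : 'F_p) != 1.
  apply/eqP => E; have : (2%:R : 'F_p) = 0 by rewrite -[2%N]/(1+1)%N natrD -{1}E addNr.
  move/eqP; rewrite -(dvdn_pcharf (pchar_Fp pp)) => /dvdn_leq => /(_ isT); lia.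
have Hg : group_set [set u : Uprod m | g u == 1].
  apply/group_setP; split; first by rewrite inE g1.
  by move=> u v; rewrite !inE gM => /eqP -> /eqP ->; rewrite mulr1.
apply/splitsP; exists (Group Hg); apply/complP; split.
  apply/eqP; rewrite eqEsubset sub1G andbT; apply/subsetP => y /setIP [yx yH].
  case: (cyc2 (Um1sq m) yx) yH => ->; first by rewrite inE.
  by rewrite inE gx (negbTE N11).
apply/eqP; rewrite eqEsubset subsetT /=; apply/subsetP => u _.
case: (gpm u) => gu.
  by rewrite -[u]mul1g mem_mulg // inE gu.
by rewrite -[u]mul1g -(Um1sq m) -mulgA mem_mulg ?cycle_id // inE gM gx gu mulrNN.
Qed.

Lemma sqrt_unit M a : (1 < M)%N -> (M %| a ^ 2 + 1)%N ->
  exists w : Um M, (w * w == Um_m1 M)%g.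
Proof.
move=> M1 dv.
set z : 'Z_M := a%:R.
have h0 : ((a ^ 2 + 1)%N%:R : 'Z_M) = 0.
  apply: val_inj; rewrite /= (val_Zp_nat M1); exact/eqP.
have zz : z * z = -1.
  by apply/eqP; rewrite -addr_eq0 -h0 natrD natrX expr2 mulr1n.
have zu : z \is a GRing.unit by apply/unitrP; exists (-z); rewrite mulrN mulNr zz opprK.
by exists (FinRing.unit _ zu); apply/eqP/val_inj; rewrite val_unitM /= zz.
Qed.

Lemma split_only n (m : 'I_n -> nat) (n0 : (0 < n)%N)
  (hm : forall i, odd (m i) /\ (1 < m i)%N) :
  [splits [set: Uprod m], over <[Uprod_m1 m]>]%g ->
  exists (j : 'I_n) (p : nat), [/\ prime p, (p %% 4 = 3)%N & (p %| m j)%N].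
Proof.
move=> hs; apply: Classical_Prop.NNPP => Hno.
have Hp j q : prime q -> (q %| m j)%N -> (q %% 4 = 1)%N.
  move=> pq qm; have oq : odd q := dvdn_odd qm (hm j).1.
  have : (q %% 2 = 1)%N by rewrite modn2 oq.
  have : (q %% 4 <> 3)%N by move=> h; apply: Hno; exists j, q.
  lia.
have Hw j : exists w : Um (m j), (w * w == Um_m1 (m j))%g.
  have [a ha] := sqrtm1 (ltnW (hm j).2) (Hp j).
  exact: sqrt_unit (hm j).2 ha.
pose y : Uprod m := finfun (fun j => xchoose (Hw j)).
have yy : (y * y = Uprod_m1 m)%g.
  by apply/ffunP => j; rewrite UmulE /y !ffunE (eqP (xchooseP (Hw j))).
case/splitsP: hs => H /complP [capH mulH].
have : y \in [set: Uprod m] by [].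
rewrite -mulH => /mulsgP [a h ha hh ey].
have aa : (a * a = 1)%g.
  by case: (cyc2 (Um1sq m) ha) => ->; [rewrite mulg1 | exact: Um1sq].
have xH : Uprod_m1 m \in H.
  rewrite -yy ey.
  have -> : (a * h * (a * h) = (a * a) * (h * h))%g.
    by rewrite -!mulgA (mulgA h) (UmulC h a) !mulgA.
  by rewrite aa mul1g groupM.
have : Uprod_m1 m \in (<[Uprod_m1 m]> :&: H)%g by rewrite inE cycle_id xH.
rewrite capH inE => /eqP x1.
pose i0 := Ordinal n0.
have := Um1E m i0; rewrite x1 U1E val_unit1 => h1.
have := congr1 val h1; rewrite Zval1 ?ZvalN1 ?(hm i0).2 //.
have := hm i0; case: (m i0) => [|[|[|k]]] //= [ok _]; lia.
Qed.

Close Scope ring_scope.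

Theorem lemma4p2 (n : nat) (m : 'I_n -> nat) :
  0 < n ->
  (forall i, odd (m i) /\ 1 < m i) ->
  [splits [set: Uprod m], over <[Uprod_m1 m]>]%g <->
  (exists (j : 'I_n) (p : nat), [/\ prime p, p %% 4 = 3 & p %| m j]).
Proof.
move=> n0 hm; split; first exact: split_only.
by case=> j [p [pp p3 pm]]; exact: (split_if hm pp p3 pm).
Qed.
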